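(* Let $\mathcal{C}=\mathsf{CSS}(A,B)$ and let $U$ be a 1-local Clifford circuit. If $U$ is a logical operator on $\mathcal{C}$, then it is equivalent to some depth-1 circuit $V$ with gates from $\{I,P,HP,PH,PHP,H\}$ such that for all $a\in A$ and all $b\in B$: $a\cap V_{P,HP,PH,H}\in B$, $a\cap V_{PH,H}\in A$, $b\cap V_{HP,PHP,PH,H}\in A$, and $b\cap V_{HP,H}\in B$.
   Context: $\mathsf{CSS}(A,B)$ is the CSS code on $n$ qubits built from classical codes $A,B\subseteq\mathbb{F}_2^n$ with $B\subseteq A^\perp$, whose stabilizer group is generated by the $X$-stabilizers $X^a$ ($a\in A$) and the $Z$-stabilizers $Z^b$ ($b\in B$); here for $a\in\mathbb{F}_2^n$ and a single-qubit gate $G$, $G^a=\bigotimes_{i:a_i=1}G_i$. A logical operator is any operator preserving the codespace. A 1-local Clifford circuit is a tensor product of single-qubit Clifford gates. ''Equivalent'' means: every 1-local Clifford circuit $U$ can be written as $U=VQ$ where $Q$ is a Pauli circuit and $V$ is a depth-1 circuit with each single-qubit gate in $\{I,P,HP,PHP,PH,H\}$ ($P$ the phase gate, $H$ the Hadamard); $U$ is a logical operator with logical action $\bar U$ iff $V$ is (up to phase) a logical operator with the same action up to phase. For a set $K$ of these single-qubit gates, $V_K=\{i : V_i\in K\}$ (the set of physical qubits on which $V$ applies a gate from $K$). For $a\in\mathbb{F}_2^n$ and $h\subseteq\{1,\dots,n\}$, $a\cap h$ denotes the vector with $(a\cap h)_i=1$ iff $a_i=1$ and $i\in h$. Up to phase,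 the gates act by conjugation as: $I: X\mapsto X, Z\mapsto Z$; $P: X\mapsto XZ, Z\mapsto Z$; $HP: X\mapsto XZ, Z\mapsto X$; $PH: X\mapsto Z, Z\mapsto XZ$; $PHP: X\mapsto X, Z\mapsto XZ$; $H: X\mapsto Z, Z\mapsto X$. *)

(* Defs.v *)
(* Qubit states are functions 'rV['F_2]_n -> algC on the
   computational basis; operators are kernels (matrix entries) indexed by
   computational basis vectors. *)
From HB Require Import structures.
From mathcomp Require Import all_boot all_order all_algebra all_field.
Set Implicit Arguments. Unset Strict Implicit. Unset Printing Implicit Defensive.
Import Order.TTheory GRing.Theory Num.Theory.
Local Open Scope ring_scope.

Notation bits n := 'rV['F_2]_n.

Definition mx2 (a b c d : algC) : 'M[algC]_2 :=
  \matrix_(i < 2, j < 2)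
    if i == 0 :> nat then (if j == 0 :> nat then a else b)
    else (if j == 0 :> nat then c else d).

Definition Xg : 'M[algC]_2 := mx2 0 1 1 0.
Definition Zg : 'M[algC]_2 := mx2 1 0 0 (-1).
Definition Yg : 'M[algC]_2 := mx2 0 (- 'i) 'i 0.
Definition Pg : 'M[algC]_2 := mx2 1 0 0 'i.
Definition Hg : 'M[algC]_2 := (sqrtC 2)^-1 *: mx2 1 1 1 (-1).

(* single-qubit Clifford gates: the group generated by H and P
   (it contains the global phase e^{i pi/4} = (HP)^3) *)
Inductive clifford1 : 'M[algC]_2 -> Prop :=
| cliff_id : clifford1 1%:M
| cliff_H G : clifford1 G -> clifford1 (Hg *m G)
| cliff_P G : clifford1 G -> clifford1 (Pg *m G).

Definition pauli1 (G : 'M[algC]_2) : Prop :=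
  G = 1%:M \/ G = Xg \/ G = Yg \/ G = Zg.

Definition op n := bits n -> bits n -> algC.

Definition bidx (x : 'F_2) : 'I_2 := inord (val x).

Definition tens n (g : 'I_n -> 'M[algC]_2) : op n :=
  fun s t => \prod_(i < n) g i (bidx (s 0 i)) (bidx (t 0 i)).

Definition opmul n (U V : op n) : op n :=
  fun s t => \sum_(u : bits n) U s u * V u t.

Definition opapply n (U : op n) (psi : bits n -> algC) : bits n -> algC :=
  fun s => \sum_(t : bits n) U s t * psi t.

Definition gpow n (G : 'M[algC]_2) (a : bits n) : op n :=
  tens (fun i => if a 0 i == 1 then G else 1%:M).

(* codespace of CSS(A,B): the common +1 eigenspace of the stabilizer group
   generated by X^a (a in A) and Z^b (b in B); classical codes are the row
   spaces of A and B *)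
Definition in_codespace n (A B : 'M['F_2]_n) (psi : bits n -> algC) : Prop :=
  (forall a : bits n, (a <= A)%MS -> opapply (gpow Xg a) psi = psi) /\
  (forall b : bits n, (b <= B)%MS -> opapply (gpow Zg b) psi = psi).

Definition logical n (A B : 'M['F_2]_n) (U : op n) : Prop :=
  forall psi, in_codespace A B psi -> in_codespace A B (opapply U psi).

Inductive gate := gI | gP | gHP | gPHP | gPH | gH.

Definition gate_mx (g : gate) : 'M[algC]_2 :=
  match g with
  | gI => 1%:M
  | gP => Pg
  | gHP => Hg *m Pg
  | gPHP => Pg *m Hg *m Pg
  | gPH => Pg *m Hg
  | gH => Hg
  end.

Definition gate_eqb (g h : gate) : bool :=
  match g, h with
  | gI, gI | gP, gP | gHP, gHP | gPHP, gPHP | gPH, gPH | gH, gH => true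
  | _, _ => false
  end.

Definition gate_in (K : seq gate) (g : gate) : bool := has (gate_eqb g) K.

Definition cap_bits n (a : bits n) (h : 'I_n -> bool) : bits n :=
  \row_i (if h i then a 0 i else 0).

Definition VK n (v : 'I_n -> gate) (K : seq gate) : 'I_n -> bool :=
  fun i => gate_in K (v i).

(* Main.v *)
Require Import Defs.
From HB Require Import structures.
From mathcomp Require Import all_boot all_order all_algebra all_field.
From mathcomp Require Import ring.
Import GRing.Theory Num.Theory.
Local Open Scope ring_scope.


Definition gi := (int * int)%type.
Definition gadd (a b : gi) : gi := (a.1 + b.1, a.2 + b.2).
Definition gmul (a b : gi) : gi := (a.1 * b.1 - a.2 * b.2, a.1 * b.2 + a.2 * b.1).
Definition phi (a : gi) : algC := a.1%:~R + a.2%:~R * 'i.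
Definition m4 := (gi * gi * gi * gi)%type.
Definition mmul (M N : m4) : m4 :=
  let '(a, b, c, d) := M in let '(e, f, g, h) := N in
  (gadd (gmul a e) (gmul b g), gadd (gmul a f) (gmul b h),
   gadd (gmul c e) (gmul d g), gadd (gmul c f) (gmul d h)).
Definition msc (k : gi) (M : m4) : m4 :=
  let '(a, b, c, d) := M in (gmul k a, gmul k b, gmul k c, gmul k d).
Definition emb (M : m4) : 'M[algC]_2 :=
  let '(a, b, c, d) := M in mx2 (phi a) (phi b) (phi c) (phi d).

Lemma phi_add a b : phi (gadd a b) = phi a + phi b.
Proof. case: a b => [a1 a2] [b1 b2]; rewrite /phi /= !rmorphD /=; ring. Qed.

Lemma phi_mul a b : phi (gmul a b) = phi a * phi b.
Proof.
case: a b => [a1 a2] [b1 b2]; rewrite /phi /= !(rmorphD, rmorphB, rmorphM) /=.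
have hi : 'i * 'i = -1 :> algC by rewrite -expr2 sqrCi.
transitivity ((a1%:~R * b1%:~R + a2%:~R * b2%:~R * (-1)) + (a1%:~R * b2%:~R + a2%:~R * b1%:~R) * 'i : algC).
  ring.
rewrite -hi; ring.
Qed.

Lemma mx2_mul (a b c d a' b' c' d' : algC) :
  mx2 a b c d *m mx2 a' b' c' d' =
  mx2 (a * a' + b * c') (a * b' + b * d') (c * a' + d * c') (c * b' + d * d').
Proof.
apply/matrixP => i j; rewrite !mxE !big_ord_recr big_ord0 /= !mxE /= add0r.
by case: i => [[|[|i]] Hi] //; case: j => [[|[|j]] Hj].
Qed.

Lemma mx2_scale (k a b c d : algC) : k *: mx2 a b c d = mx2 (k * a) (k * b) (k * c) (k * d).
Proof.
apply/matrixP => i j; rewrite !mxE.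
by case: i => [[|[|i]] Hi] //; case: j => [[|[|j]] Hj].
Qed.

Lemma emb_mul M N : emb M *m emb N = emb (mmul M N).
Proof.
case: M => [[[a b] c] d]; case: N => [[[e f] g] h].
by rewrite /emb /= mx2_mul !phi_add !phi_mul.
Qed.

Lemma emb_sc k M : phi k *: emb M = emb (msc k M).
Proof.
case: M => [[[a b] c] d]; by rewrite /emb /= mx2_scale !phi_mul.
Qed.

Definition I0 : m4 := ((1,0), (0,0), (0,0), (1,0)).
Definition X0 : m4 := ((0,0), (1,0), (1,0), (0,0)).
Definition Z0 : m4 := ((1,0), (0,0), (0,0), (-1,0)).
Definition Y0 : m4 := ((0,0), (0,-1), (0,1), (0,0)).
Definition P0 : m4 := ((1,0), (0,0), (0,0), (0,1)).
Definition H0 : m4 := ((1,0), (1,0), (1,0), (-1,0)).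

Lemma phi00 : phi (0,0) = 0. Proof. by rewrite /phi /= mul0r addr0. Qed.
Lemma phi10 : phi (1,0) = 1. Proof. by rewrite /phi /= mul0r addr0. Qed.
Lemma phiN10 : phi (-1,0) = -1. Proof. by rewrite /phi /= mul0r addr0. Qed.
Lemma phi01 : phi (0,1) = 'i. Proof. by rewrite /phi /= mul1r add0r. Qed.
Lemma phi0N1 : phi (0,-1) = - 'i. Proof. by rewrite /phi /= mulN1r add0r. Qed.
Definition phiE := (phi00, phi10, phiN10, phi01, phi0N1).

Lemma I0E : emb I0 = 1%:M.
Proof.
rewrite /emb /= !phiE; apply/matrixP => i j; rewrite !mxE.
by case: i => [[|[|i]] Hi] //; case: j => [[|[|j]] Hj].
Qed.
Lemma X0E : emb X0 = Xg. Proof. by rewrite /emb /= !phiE. Qed.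
Lemma Z0E : emb Z0 = Zg. Proof. by rewrite /emb /= !phiE. Qed.
Lemma Y0E : emb Y0 = Yg. Proof. by rewrite /emb /= !phiE. Qed.
Lemma P0E : emb P0 = Pg. Proof. by rewrite /emb /= !phiE. Qed.
Lemma H0E : Hg = (sqrtC 2)^-1 *: emb H0. Proof. by rewrite /emb /= !phiE. Qed.

Definition s2 : algC := (sqrtC 2)^-1.
Lemma s2_neq0 : s2 != 0.
Proof. by rewrite /s2 invr_eq0 sqrtC_eq0 pnatr_eq0. Qed.

Definition kk (v : gate) : algC :=
  match v with gI | gP => 1 | _ => s2 end.
Definition g0 (v : gate) : m4 :=
  match v with
  | gI => I0 | gP => P0 | gHP => mmul H0 P0 | gPHP => mmul (mmul P0 H0) P0
  | gPH => mmul P0 H0 | gH => H0 end.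
Lemma kk_neq0 v : kk v != 0.
Proof. case: v => //=; try exact: s2_neq0; exact: oner_neq0. Qed.

Lemma gateE v : gate_mx v = kk v *: emb (g0 v).
Proof.
case: v; rewrite /gate_mx /kk /g0 ?H0E -?P0E -?I0E -/s2 ?scale1r //.
- by rewrite -scalemxAl emb_mul.
- by rewrite -scalemxAr -scalemxAl !emb_mul.
- by rewrite -scalemxAr emb_mul.
Qed.

Inductive pau := pI | pX | pY | pZ.
Definition p0 (p : pau) : m4 := match p with pI => I0 | pX => X0 | pY => Y0 | pZ => Z0 end.
Definition pmx (p : pau) := emb (p0 p).
Lemma pmx_pauli p : pauli1 (pmx p).
Proof.
rewrite /pauli1 /pmx; case: p; rewrite /p0 ?I0E ?X0E ?Y0E ?Z0E; tauto.
Qed.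

Lemma tab_gen (kG : algC) (G0 : m4) v v' p (gam : gi) :
  mmul G0 (g0 v) = msc gam (mmul (g0 v') (p0 p)) ->
  (kG *: emb G0) *m gate_mx v = (kG * kk v / kk v' * phi gam) *: (gate_mx v' *m pmx p).
Proof.
move=> E; rewrite !gateE /pmx -!scalemxAl -!scalemxAr !scalerA !emb_mul E -emb_sc !scalerA.
congr (_ *: _); by rewrite [RHS]mulrAC divfK ?kk_neq0.
Qed.

Lemma HgE' : Hg = s2 *: emb H0. Proof. exact: H0E. Qed.
Lemma PgE' : Pg = 1 *: emb P0. Proof. by rewrite scale1r P0E. Qed.

Lemma tabH v : exists v' p c, Hg *m gate_mx v = c *: (gate_mx v' *m pmx p).
Proof.
rewrite HgE'; case: v.
- by exists gH, pI; eexists; apply: (tab_gen _ _ _ _ _ (1,0)).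
- by exists gHP, pI; eexists; apply: (tab_gen _ _ _ _ _ (1,0)).
- by exists gP, pI; eexists; apply: (tab_gen _ _ _ _ _ (2,0)).
- by exists gPH, pX; eexists; apply: (tab_gen _ _ _ _ _ (1,1)).
- by exists gPHP, pX; eexists; apply: (tab_gen _ _ _ _ _ (1,-1)).
- by exists gI, pI; eexists; apply: (tab_gen _ _ _ _ _ (2,0)).
Qed.

Lemma tabP v : exists v' p c, Pg *m gate_mx v = c *: (gate_mx v' *m pmx p).
Proof.
rewrite PgE'; case: v.
- by exists gP, pI; eexists; apply: (tab_gen _ _ _ _ _ (1,0)).
- by exists gI, pZ; eexists; apply: (tab_gen _ _ _ _ _ (1,0)).
- by exists gPHP, pI; eexists; apply: (tab_gen _ _ _ _ _ (1,0)).
- by exists gHP, pY; eexists; apply: (tab_gen _ _ _ _ _ (-1,0)).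
- by exists gH, pX; eexists; apply: (tab_gen _ _ _ _ _ (1,0)).
- by exists gPH, pI; eexists; apply: (tab_gen _ _ _ _ _ (1,0)).
Qed.

Lemma pm_gen P Q R (gam : gi) : mmul P Q = msc gam R -> emb P *m emb Q = phi gam *: emb R.
Proof. by move=> E; rewrite emb_mul E emb_sc. Qed.

Lemma pmulE p q : exists r c, pmx p *m pmx q = c *: pmx r.
Proof.
rewrite /pmx; case: p; case: q.
all: first [ exists pI; eexists; apply: (pm_gen _ _ _ (1,0)); reflexivity
           | exists pX; eexists; apply: (pm_gen _ _ _ (1,0)); reflexivity
           | exists pY; eexists; apply: (pm_gen _ _ _ (1,0)); reflexivity
           | exists pZ; eexists; apply: (pm_gen _ _ _ (1,0)); reflexivity
           | exists pX; eexists; apply: (pm_gen _ _ _ (0,1)); reflexivity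
           | exists pY; eexists; apply: (pm_gen _ _ _ (0,1)); reflexivity
           | exists pZ; eexists; apply: (pm_gen _ _ _ (0,1)); reflexivity
           | exists pX; eexists; apply: (pm_gen _ _ _ (0,-1)); reflexivity
           | exists pY; eexists; apply: (pm_gen _ _ _ (0,-1)); reflexivity
           | exists pZ; eexists; apply: (pm_gen _ _ _ (0,-1)); reflexivity ].
Qed.

Lemma cliff_dec G : clifford1 G -> exists v p c, G = c *: (gate_mx v *m pmx p).
Proof.
elim=> [|G' _ [v [p [c ->]]]|G' _ [v [p [c ->]]]].
- by exists gI, pI, 1; rewrite scale1r /pmx /p0 I0E mulmx1.
- have [v' [p' [c' E]]] := tabH v.
  have [r [c'' E2]] := pmulE p' p.
  exists v', r, (c * c' * c'').
  by rewrite -scalemxAr mulmxA E -scalemxAl -mulmxA E2 -!scalemxAr !scalerA.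
- have [v' [p' [c' E]]] := tabP v.
  have [r [c'' E2]] := pmulE p' p.
  exists v', r, (c * c' * c'').
  by rewrite -scalemxAr mulmxA E -scalemxAl -mulmxA E2 -!scalemxAr !scalerA.
Qed.

Lemma F2c (x : 'F_2) : x = 0 \/ x = 1.
Proof. case: x => [[|[|m]] H]. left. exact/eqP. right; exact/eqP. by []. Qed.
Lemma F2_11 : (1 : 'F_2) + 1 = 0. Proof. by apply/eqP. Qed.
Lemma F2_10 : ((1 : 'F_2) == 0) = false. Proof. by []. Qed.
Lemma F2_01 : ((0 : 'F_2) == 1) = false. Proof. by []. Qed.
Lemma F2_xx (x : 'F_2) : x + x = 0.
Proof. by case: (F2c x) => ->; rewrite ?addr0 ?F2_11. Qed.

Lemma bidxE (x : 'F_2) : bidx x = x.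
Proof. apply: val_inj; rewrite /bidx /= inordK //. Qed.

Definition sgn (b : 'F_2) : algC := if b == 0 then 1 else -1.
Lemma sgn0 : sgn 0 = 1. Proof. by rewrite /sgn eqxx. Qed.
Lemma sgn1 : sgn 1 = -1. Proof. by rewrite /sgn F2_10. Qed.
Lemma sgnD a b : sgn (a + b) = sgn a * sgn b.
Proof.
case: (F2c a) => ->; case: (F2c b) => ->;
  rewrite ?addr0 ?add0r ?F2_11 ?sgn0 ?sgn1 ?mulr1 ?mul1r //.
by rewrite mulrNN mulr1.
Qed.
Lemma sgn_neq0 a : sgn a != 0.
Proof. by case: (F2c a) => ->; rewrite ?sgn0 ?sgn1 ?oppr_eq0 oner_eq0. Qed.
Lemma sgn_eq1 a : sgn a = 1 -> a = 0.
Proof.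
case: (F2c a) => -> //; rewrite sgn1 => /eqP.
rewrite -subr_eq0 -opprD oppr_eq0 (_ : 1 + 1 = 2%:R) // pnatr_eq0 //.
Qed.

Definition b2f (b : bool) : 'F_2 := if b then 1 else 0.

Definition pm (x z : 'F_2) (M : 'M[algC]_2) :=
  forall u w : 'F_2, M (bidx u) (bidx w) = if w == u + x then sgn (z * w) else 0.

Definition XZ0 : m4 := ((0,0), (-1,0), (1,0), (0,0)).
Definition mon0 (x z : bool) : m4 :=
  if x then (if z then XZ0 else X0) else (if z then Z0 else I0).

Lemma mon_pm (x z : bool) : pm (b2f x) (b2f z) (emb (mon0 x z)).
Proof.
move=> u w; rewrite !bidxE.
case: x; case: z; case: (F2c u) => ->; case: (F2c w) => ->;
  rewrite /= !mxE /= ?phiE ?addr0 ?add0r ?F2_11 ?mulr0 ?mul0r ?mulr1 ?mul1r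
     ?eqxx ?F2_10 ?F2_01 ?sgn0 ?sgn1 //.
Qed.

Definition tXx (v : gate) := gate_in [:: gI; gP; gPH; gPHP] v.
Definition tXz (v : gate) := gate_in [:: gP; gPH; gHP; gH] v.
Definition tZx (v : gate) := gate_in [:: gPH; gPHP; gHP; gH] v.
Definition tZz (v : gate) := gate_in [:: gI; gP; gHP; gPHP] v.

Lemma conj_gen G0 v W (gam : gi) :
  mmul G0 (g0 v) = msc gam (mmul (g0 v) W) ->
  emb G0 *m gate_mx v = phi gam *: (gate_mx v *m emb W).
Proof.
move=> E; rewrite gateE -scalemxAr -scalemxAl !emb_mul E -emb_sc !scalerA.
by rewrite mulrC.
Qed.

Ltac try_units tac :=
  first [ tac constr:(((1,0) : gi)); reflexivity | tac constr:(((-1,0) : gi)); reflexivity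
        | tac constr:(((0,1) : gi)); reflexivity | tac constr:(((0,-1) : gi)); reflexivity ].

Lemma tabX v : exists rho, Xg *m gate_mx v = rho *: (gate_mx v *m emb (mon0 (tXx v) (tXz v))).
Proof.
rewrite -X0E; case: v; eexists; try_units ltac:(fun g => apply: (conj_gen X0 _ _ g)).
Qed.

Lemma tabZ v : exists rho, Zg *m gate_mx v = rho *: (gate_mx v *m emb (mon0 (tZx v) (tZz v))).
Proof.
rewrite -Z0E; case: v; eexists; try_units ltac:(fun g => apply: (conj_gen Z0 _ _ g)).
Qed.

Lemma comm_gen W Q (gam : gi) : mmul W Q = msc gam (mmul Q W) ->
  emb W *m emb Q = phi gam *: (emb Q *m emb W).
Proof. by move=> E; rewrite !emb_mul E emb_sc. Qed.

Lemma commE x z p : exists e, emb (mon0 x z) *m pmx p = e *: (pmx p *m emb (mon0 x z)).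
Proof.
rewrite /pmx; case: x; case: z; case: p; eexists;
  try_units ltac:(fun g => apply: (comm_gen _ _ g)).
Qed.

Lemma qubit_gen (G : 'M[algC]_2) (tx tz : gate -> bool) v p c (u : 'F_2) :
  (exists rho, G *m gate_mx v = rho *: (gate_mx v *m emb (mon0 (tx v) (tz v)))) ->
  exists e, (if u == 1 then G else 1%:M) *m (c *: (gate_mx v *m pmx p)) =
    e *: ((c *: (gate_mx v *m pmx p)) *m emb (mon0 (tx v && (u == 1)) (tz v && (u == 1)))).
Proof.
move=> [rho E].
case: (F2c u) => ->; rewrite ?eqxx ?F2_01 ?andbT ?andbF.
  by exists 1; rewrite /mon0 I0E mul1mx mulmx1 scale1r.
have [e E2] := commE (tx v) (tz v) p.
exists (rho * e).
have L1 : G *m (c *: (gate_mx v *m pmx p)) =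
    (c * rho * e) *: (gate_mx v *m (pmx p *m emb (mon0 (tx v) (tz v)))).
  by rewrite -scalemxAr (mulmxA G) E -scalemxAl -(mulmxA (gate_mx v) _ (pmx p)) E2 -scalemxAr !scalerA.
rewrite L1 -scalemxAl scalerA mulmxA.
by congr (_ *: _); ring.
Qed.
Set Implicit Arguments. Unset Strict Implicit. Unset Printing Implicit Defensive.

Lemma sum_I2 (F : 'I_2 -> algC) : \sum_(l < 2) F l = \sum_(x : 'F_2) F (bidx x).
Proof.
rewrite (reindex (fun x : 'F_2 => bidx x)) //.
apply: onW_bij; exists (fun l : 'I_2 => (l : 'F_2)) => x.
  by rewrite bidxE.
by apply: val_inj; rewrite bidxE.
Qed.

Lemma sum_ffun n (F : {ffun 'I_n -> 'F_2} -> algC) :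
  \sum_(f : {ffun 'I_n -> 'F_2}) F f = \sum_(u : bits n) F [ffun i => u 0 i].
Proof.
rewrite (reindex (fun u : bits n => [ffun i => u 0 i])) //.
apply: onW_bij; exists (fun f : {ffun 'I_n -> 'F_2} => \row_i f i) => x.
  by apply/rowP => i; rewrite mxE ffunE.
by apply/ffunP => i; rewrite !ffunE mxE.
Qed.

Lemma tens_mul n (f h : 'I_n -> 'M[algC]_2) s t :
  opmul (tens f) (tens h) s t = tens (fun i => f i *m h i) s t.
Proof.
rewrite /tens /opmul; symmetry.
under eq_bigr do rewrite mxE sum_I2.
rewrite bigA_distr_bigA /= sum_ffun.
apply: eq_bigr => u _; rewrite -big_split; apply: eq_bigr => i _.
by rewrite ffunE bidxE.
Qed.

Lemma eq_tens n (f h : 'I_n -> 'M[algC]_2) s t :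
  (forall i, f i = h i) -> tens f s t = tens h s t.
Proof. by move=> E; apply: eq_bigr => i _; rewrite E. Qed.

Lemma tens_scale n (c : 'I_n -> algC) (f : 'I_n -> 'M[algC]_2) s t :
  tens (fun i => c i *: f i) s t = (\prod_i c i) * tens f s t.
Proof. by rewrite /tens -big_split; apply: eq_bigr => i _; rewrite mxE. Qed.

Lemma opapply_mul n (U V : op n) psi s :
  opapply (opmul U V) psi s = opapply U (opapply V psi) s.
Proof.
rewrite /opapply /opmul.
under eq_bigr do rewrite mulr_suml.
rewrite exchange_big /=; apply: eq_bigr => u _.
by rewrite mulr_sumr; apply: eq_bigr => t _; rewrite mulrA.
Qed.

Lemma eq_opapply n (U V : op n) psi psi' s :
  (forall t, U s t = V s t) -> (forall t, psi t = psi' t) ->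
  opapply U psi s = opapply V psi' s.
Proof. by move=> E E'; apply: eq_bigr => t _; rewrite E E'. Qed.

Lemma opapply_scale n (U : op n) (c : algC) psi s :
  opapply (fun s t => c * U s t) psi s = c * opapply U psi s.
Proof. by rewrite /opapply mulr_sumr; apply: eq_bigr => t _; rewrite mulrA. Qed.

Lemma opapply_scalef n (U : op n) (c : algC) psi s :
  opapply U (fun t => c * psi t) s = c * opapply U psi s.
Proof. by rewrite /opapply mulr_sumr; apply: eq_bigr => t _; rewrite mulrCA. Qed.

Definition dot n (z t : bits n) : 'F_2 := \sum_i z 0 i * t 0 i.

Lemma dotD n (z t t' : bits n) : dot z (t + t') = dot z t + dot z t'.
Proof.
by rewrite /dot -big_split; apply: eq_bigr => i _; rewrite mxE mulrDr.
Qed.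

Lemma dotE n (z t : bits n) : dot z t = (z *m t^T) 0 0.
Proof. by rewrite /dot mxE; apply: eq_bigr => i _; rewrite mxE. Qed.

Lemma tens_mono n (f : 'I_n -> 'M[algC]_2) (x z : bits n) :
  (forall i, pm (x 0 i) (z 0 i) (f i)) ->
  forall psi s, opapply (tens f) psi s = sgn (dot z (s + x)) * psi (s + x).
Proof.
move=> Hf psi s; rewrite /opapply (bigD1 (s + x)) //= big1 ?addr0.
  congr (_ * _); rewrite /tens /dot.
  rewrite (big_morph sgn sgnD sgn0).
  apply: eq_bigr => i _; by rewrite Hf mxE eqxx.
move=> t Ht.
have [i Hi] : exists i, t 0 i != (s + x) 0 i.
  case: (pickP (fun i => t 0 i != (s + x) 0 i)) => [i Hi|H]; first by exists i.
  by case/eqP: Ht; apply/rowP => j; have := H j => /= /negbFE/eqP.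
rewrite mxE in Hi.
by rewrite /tens (bigD1 i) //= Hf ifN // !mul0r.
Qed.

From Stdlib Require Import FunctionalExtensionality.

Lemma pm_X (u : 'F_2) : pm u 0 (if u == 1 then Xg else 1%:M).
Proof.
case: (F2c u) => ->; rewrite ?eqxx ?F2_01.
  by rewrite -I0E; exact: (mon_pm false false).
by rewrite -X0E; exact: (mon_pm true false).
Qed.
Lemma pm_Z (u : 'F_2) : pm 0 u (if u == 1 then Zg else 1%:M).
Proof.
case: (F2c u) => ->; rewrite ?eqxx ?F2_01.
  by rewrite -I0E; exact: (mon_pm false false).
by rewrite -Z0E; exact: (mon_pm false true).
Qed.
Lemma pm_1 : pm 0 0 1%:M.
Proof. by rewrite -I0E; exact: (mon_pm false false). Qed.

Lemma zero_bits n i : (0 : bits n) 0 i = 0.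
Proof. by rewrite mxE. Qed.

Lemma dot0 n (t : bits n) : dot 0 t = 0.
Proof. by rewrite /dot big1 // => i _; rewrite zero_bits mul0r. Qed.

Definition cw n (A : 'M['F_2]_n) (y : bits n) : bits n -> algC :=
  fun s => if ((s - y)%R <= A)%MS then 1 else 0.

Lemma sub_addr n (A : 'M['F_2]_n) (u a : bits n) :
  (a <= A)%MS -> ((u + a)%R <= A)%MS = (u <= A)%MS.
Proof.
move=> Ha; apply/idP/idP => H; last exact: (addmx_sub H Ha).
by rewrite -(addrK a u); apply: addmx_sub => //; rewrite eqmx_opp.
Qed.

Lemma cw_code n (A B : 'M['F_2]_n) y :
  A *m B^T = 0 -> y *m B^T = 0 -> in_codespace A B (cw A y).
Proof.
move=> AB yB; split => a Ha; apply: functional_extensionality => s.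
  have hx : forall i, pm (a 0 i) ((0 : bits n) 0 i) (if a 0 i == 1 then Xg else 1%:M).
    by move=> i; rewrite zero_bits; exact: pm_X.
  rewrite /gpow (tens_mono hx).
  rewrite dot0 sgn0 mul1r /cw addrAC. by rewrite (sub_addr _ Ha).
have hz : forall i, pm ((0 : bits n) 0 i) (a 0 i) (if a 0 i == 1 then Zg else 1%:M).
  by move=> i; rewrite zero_bits; exact: pm_Z.
rewrite /gpow (tens_mono hz).
rewrite addr0 /cw; case: ifP => H; last by rewrite mulr0.
suff -> : dot a s = 0 by rewrite sgn0 mulr1.
case/submxP: Ha => D ->; case/submxP: H => W Es.
have -> : s = W *m A + y by rewrite -Es subrK.
have BA : B *m A^T = 0 by rewrite -[B]trmxK -trmx_mul AB trmx0.
have By : B *m y^T = 0 by rewrite -[B]trmxK -trmx_mul yB trmx0.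
by rewrite dotE linearD /= trmx_mul mulmxDr -!mulmxA (mulmxA B) BA mul0mx mulmx0 By mulmx0 addr0 mxE.
Qed.

Lemma dorth n (B : 'M['F_2]_n) (z : bits n) :
  (forall y : bits n, y *m B^T = 0 -> z *m y^T = 0) -> (z <= B)%MS.
Proof.
move=> H; set K := kermx B^T.
have zK : z *m K^T = 0.
  apply/matrixP => i j; rewrite ord1.
  have -> : (z *m K^T) 0 j = (z *m (row j K)^T) 0 0.
    by rewrite !mxE; apply: eq_bigr => k _; rewrite !mxE.
  by rewrite H ?mxE // -row_mul mulmx_ker row0.
have zker : (z <= kermx K^T)%MS by apply/sub_kermxP.
have BK : (B <= kermx K^T)%MS.
  by apply/sub_kermxP; rewrite -[B]trmxK -trmx_mul mulmx_ker trmx0.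
have KB : (kermx K^T <= B)%MS.
  rewrite -(mxrank_leqif_sup BK).2.
  by rewrite mxrank_ker mxrank_tr /K mxrank_ker mxrank_tr subKn // rank_leq_col.
exact: submx_trans zker KB.
Qed.

Lemma extract n (A B : 'M['F_2]_n) (f : 'I_n -> 'M[algC]_2) (x z : bits n) (c : algC) :
  A *m B^T = 0 -> (forall i, pm (x 0 i) (z 0 i) (f i)) ->
  (forall psi, in_codespace A B psi -> forall s, c * opapply (tens f) psi s = psi s) ->
  (x <= A)%MS /\ (z <= B)%MS.
Proof.
move=> AB Hf H.
have H0 := H _ (cw_code AB (mul0mx _ _)) 0.
rewrite (tens_mono Hf) /cw !add0r !subr0 oppr0 sub0mx in H0.
have xA : (x <= A)%MS.
  apply/negPn/negP => nx; move: H0; rewrite (negbTE nx) !mulr0 => H1.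
  by move: (@oner_neq0 algC); rewrite -H1 eqxx.
rewrite xA mulr1 in H0.
split => //; apply: dorth => y Hy.
have Hy0 := H _ (cw_code AB Hy) y.
rewrite (tens_mono Hf) /cw subrr sub0mx (addrC y x) addrK xA mulr1 dotD sgnD in Hy0.
have E1 : sgn (dot z y) = 1.
  by rewrite -[RHS]Hy0 mulrA H0 mul1r.
apply/matrixP => i j; rewrite !ord1 -dotE (sgn_eq1 _ E1) mxE //.
Qed.

Lemma HH : Hg *m Hg = 1%:M.
Proof.
rewrite HgE' -scalemxAl -scalemxAr scalerA emb_mul.
have -> : mmul H0 H0 = msc (2,0) I0 by reflexivity.
rewrite -emb_sc I0E scalerA.
have -> : phi (2,0) = 2%:R by rewrite /phi /= mul0r addr0.
by rewrite /s2 -invfM -expr2 sqrtCK mulVf ?scale1r // pnatr_eq0.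
Qed.

Lemma PPPP : Pg *m (Pg *m Pg *m Pg) = 1%:M.
Proof.
rewrite -P0E !emb_mul -I0E; congr emb; reflexivity.
Qed.

Lemma cliff_unit G : clifford1 G -> G \in unitmx.
Proof.
elim=> [|G' _ IH|G' _ IH]; first exact: unitmx1.
  by rewrite unitmx_mul IH andbT; exact: (mulmx1_unit HH).1.
by rewrite unitmx_mul IH andbT; exact: (mulmx1_unit PPPP).1.
Qed.

Lemma cliff_dec' G : clifford1 G ->
  exists t : gate * pau * algC, G = t.2 *: (gate_mx t.1.1 *m pmx t.1.2).
Proof. by move=> /cliff_dec [v [p [c E]]]; exists (v, p, c). Qed.

Lemma tens_inv n (g : 'I_n -> 'M[algC]_2) : (forall i, g i \in unitmx) ->
  forall phi s, opapply (tens (fun i => invmx (g i))) (opapply (tens g) phi) s = phi s.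
Proof.
move=> gU f s; rewrite -opapply_mul.
transitivity (opapply (tens (fun _ : 'I_n => 1%:M)) f s).
  by apply: eq_opapply => // t; rewrite tens_mul; apply: eq_tens => i; rewrite mulVmx.
have h1 : forall i, pm ((0 : bits n) 0 i) ((0 : bits n) 0 i) 1%:M.
  by move=> i; rewrite zero_bits; exact: pm_1.
by rewrite (tens_mono h1) dot0 sgn0 mul1r addr0.
Qed.

Lemma extract_log n (A B : 'M['F_2]_n) (g : 'I_n -> 'M[algC]_2) (G : 'M[algC]_2)
    (w : bits n) (M : 'I_n -> 'M[algC]_2) (eps : 'I_n -> algC) (x z : bits n) :
  A *m B^T = 0 -> (forall i, g i \in unitmx) -> logical A B (tens g) ->
  (forall psi, in_codespace A B psi -> opapply (gpow G w) psi = psi) ->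
  (forall i, (if w 0 i == 1 then G else 1%:M) *m g i = eps i *: (g i *m M i)) ->
  (forall i, pm (x 0 i) (z 0 i) (M i)) ->
  (x <= A)%MS /\ (z <= B)%MS.
Proof.
move=> AB gU Hlog Hstab Hc Hpm.
apply: (@extract _ _ _ _ _ _ (\prod_i eps i) AB Hpm) => psi Hpsi s.
have E := Hstab _ (Hlog _ Hpsi).
set c := \prod_i eps i.
have E' : forall s', opapply (tens g) (fun t => c * opapply (tens M) psi t) s' =
                     opapply (tens g) psi s'.
  move=> s'; rewrite opapply_scalef -opapply_mul -opapply_scale.
  transitivity (opapply (opmul (gpow G w) (tens g)) psi s').
    apply: eq_opapply => // t.
    by rewrite /gpow !tens_mul (eq_tens s' t Hc) tens_scale.
  by rewrite opapply_mul E.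
transitivity (opapply (tens (fun i => invmx (g i)))
               (opapply (tens g) (fun t => c * opapply (tens M) psi t)) s).
  by rewrite tens_inv.
rewrite -[RHS](tens_inv gU psi s).
by apply: eq_opapply => // t; exact: E'.
Qed.

Lemma capE (u : 'F_2) (b : bool) : (if b then u else 0) = b2f (b && (u == 1)).
Proof. by case: b => //=; case: (F2c u) => ->; rewrite ?eqxx ?F2_01. Qed.

Lemma cap0 n (h : 'I_n -> bool) : cap_bits (0 : bits n) h = 0.
Proof. by apply/rowP => i; rewrite !mxE if_same. Qed.

Definition T n (v : 'I_n -> gate) (p : bits n * bits n) : bits n * bits n :=
  (cap_bits p.1 (fun i => tXx (v i)) + cap_bits p.2 (fun i => tZx (v i)),
   cap_bits p.1 (fun i => tXz (v i)) + cap_bits p.2 (fun i => tZz (v i))).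
Definition T' n (v : 'I_n -> gate) (p : bits n * bits n) : bits n * bits n :=
  (cap_bits p.1 (VK v [:: gI; gP; gHP; gPHP]) + cap_bits p.2 (VK v [:: gHP; gPHP; gPH; gH]),
   cap_bits p.1 (VK v [:: gP; gHP; gPH; gH]) + cap_bits p.2 (VK v [:: gI; gP; gPH; gPHP])).

Lemma TK n (v : 'I_n -> gate) : cancel (T v) (T' v).
Proof.
case=> x z; rewrite /T /T' /=; congr pair; apply/rowP => i; rewrite !mxE /VK;
  case: (v i) => /=; case: (F2c (x 0 i)) => Hx; case: (F2c (z 0 i)) => Hz;
  rewrite ?Hx ?Hz; by apply/eqP.
Qed.

Lemma compl1 n (v : 'I_n -> gate) (a : bits n) :
  cap_bits a (VK v [:: gPH; gH]) = a - cap_bits a (VK v [:: gI; gP; gHP; gPHP]).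
Proof.
apply/rowP => i; rewrite !mxE /VK; case: (v i) => /=; by rewrite ?subrr ?subr0.
Qed.
Lemma compl2 n (v : 'I_n -> gate) (a : bits n) :
  cap_bits a (VK v [:: gHP; gH]) = a - cap_bits a (VK v [:: gI; gP; gPH; gPHP]).
Proof.
apply/rowP => i; rewrite !mxE /VK; case: (v i) => /=; by rewrite ?subrr ?subr0.
Qed.

Lemma subB_sub n (A : 'M['F_2]_n) (a b : bits n) :
  (a <= A)%MS -> (b <= A)%MS -> ((a - b)%R <= A)%MS.
Proof. by move=> Ha Hb; apply: addmx_sub => //; rewrite eqmx_opp. Qed.

Theorem proposition6 (n : nat) (A B : 'M['F_2]_n) (g : 'I_n -> 'M[algC]_2) :
  (A *m B^T = 0) ->
  (forall i, clifford1 (g i)) ->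
  logical A B (tens g) ->
  exists (v : 'I_n -> gate) (q : 'I_n -> 'M[algC]_2) (lam : algC),
    (forall i, pauli1 (q i)) /\
    (forall s t, tens g s t =
                 lam * opmul (tens (fun i => gate_mx (v i))) (tens q) s t) /\
    (forall a : bits n, (submx a A) ->
       (submx (cap_bits a (VK v [:: gP; gHP; gPH; gH])) B) /\
       (submx (cap_bits a (VK v [:: gPH; gH])) A)) /\
    (forall b : bits n, (submx b B) ->
       (submx (cap_bits b (VK v [:: gHP; gPHP; gPH; gH])) A) /\
       (submx (cap_bits b (VK v [:: gHP; gH])) B)).
Proof.
move=> AB hg hlog.
have [D HD] := fin_all_exists (fun i => cliff_dec' (hg i)).
pose v := fun i => (D i).1.1.
have gU : forall i, g i \in unitmx by move=> i; exact: cliff_unit.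
exists v, (fun i => pmx (D i).1.2), (\prod_i (D i).2).
split; first by move=> i; exact: pmx_pauli.
split.
  by move=> s t; rewrite (eq_tens s t HD) tens_scale tens_mul.
have XA : forall a : bits n, (a <= A)%MS ->
    (cap_bits a (fun i => tXx (v i)) <= A)%MS /\ (cap_bits a (fun i => tXz (v i)) <= B)%MS.
  move=> a Ha.
  have [eps Heps] := fin_all_exists (fun i =>
     qubit_gen Xg tXx tXz (v i) (D i).1.2 (D i).2 (a 0 i) (tabX (v i))).
  apply: (@extract_log _ _ _ _ Xg a
           (fun i => emb (mon0 (tXx (v i) && (a 0 i == 1)) (tXz (v i) && (a 0 i == 1))))
           eps _ _ AB gU hlog).
  - by move=> psi Hpsi; exact: Hpsi.1 _ Ha.
  - by move=> i; rewrite [g i]HD; exact: Heps.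
  - by move=> i; rewrite !mxE !capE; exact: mon_pm.
have ZB : forall b : bits n, (b <= B)%MS ->
    (cap_bits b (fun i => tZx (v i)) <= A)%MS /\ (cap_bits b (fun i => tZz (v i)) <= B)%MS.
  move=> b Hb.
  have [eps Heps] := fin_all_exists (fun i =>
     qubit_gen Zg tZx tZz (v i) (D i).1.2 (D i).2 (b 0 i) (tabZ (v i))).
  apply: (@extract_log _ _ _ _ Zg b
           (fun i => emb (mon0 (tZx (v i) && (b 0 i == 1)) (tZz (v i) && (b 0 i == 1))))
           eps _ _ AB gU hlog).
  - by move=> psi Hpsi; exact: Hpsi.2 _ Hb.
  - by move=> i; rewrite [g i]HD; exact: Heps.
  - by move=> i; rewrite !mxE !capE; exact: mon_pm.
pose L := [set p : bits n * bits n | ((p.1 <= A)%MS && (p.2 <= B)%MS)].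
have Tinj : injective (T v) := can_inj (TK v).
have sub : [set T v p | p in L] \subset L.
  apply/subsetP => q /imsetP [p]; rewrite inE => /andP [H1 H2] ->; rewrite inE /=.
  have [a1 a2] := XA _ H1; have [b1 b2] := ZB _ H2.
  by rewrite !addmx_sub.
have eqL := subset_cardP (card_imset L Tinj) sub.
have back : forall p, p \in L -> T' v p \in L.
  by move=> p; rewrite -eqL => /imsetP [q Hq ->]; rewrite TK.
split.
  move=> a Ha; have := back (a, 0); rewrite !inE /T' /= Ha sub0mx !cap0 !addr0.
  move=> /(_ isT) /andP [h1 h2]; split; first exact: h2.
  by rewrite compl1 subB_sub.
move=> b Hb; have := back (0, b); rewrite !inE /T' /= Hb sub0mx !cap0 !add0r.
move=> /(_ isT) /andP [h1 h2]; split; first exact: h1.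
by rewrite compl2 subB_sub.
Qed.
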